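(* Let $m_{11},m_{12},m_{13}\in k$ with $(m_{11},m_{12},m_{13})\neq0$ and $m_{12}l_1^2+m_{13}l_2^2=m_{11}$ where $l_1=l_2=0$, and let $M=\begin{pmatrix}m_{11}&m_{12}&m_{13}\\ l_1m_{11}&l_1m_{12}&l_1m_{13}\\ l_2m_{11}&l_2m_{12}&l_2m_{13}\end{pmatrix}$. Then: (1) if $m_{12}\neq0$ and $m_{13}\neq0$, then $\mathcal{A}_{\mathcal{O}_{-1}(k^3)}(M)\cong\mathcal{A}_{\mathcal{O}_{-1}(k^3)}(E_{12}+E_{13})$; (2) if $m_{13}=0,m_{12}\neq0$, or $m_{12}=0,m_{13}\neq0$, then $\mathcal{A}_{\mathcal{O}_{-1}(k^3)}(M)\cong\mathcal{A}_{\mathcal{O}_{-1}(k^3)}(E_{12})$.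
   Context: $k$ is an algebraically closed field of characteristic zero. $E_{ij}$ denotes the $3\times3$ matrix unit with $1$ in position $(i,j)$ and $0$ elsewhere. For $M=(m_{ij})\in M_3(k)$, $\mathcal{A}_{\mathcal{O}_{-1}(k^3)}(M)$ is the connected cochain DG algebra whose underlying graded algebra is generated by degree-one $x_1,x_2,x_3$ subject to $x_ix_j=-x_jx_i$ ($i<j$), with differential determined by $\partial(x_i)=\sum_j m_{ij}x_j^2$ and the Leibniz rule; $\cong$ means isomorphism of DG algebras. *)

(* Defs.v *)
From HB Require Import structures.
From mathcomp Require Import all_boot all_order all_algebra.
From mathcomp Require Import mpoly.
Set Implicit Arguments. Unset Strict Implicit. Unset Printing Implicit Defensive.
Import Order.TTheory GRing.Theory.
Local Open Scope ring_scope.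

(* Concrete model of the graded algebra O_{-1}(k^3) = k<x1,x2,x3>/(x_i x_j + x_j x_i, i<j):
   underlying k-vector space with basis the ordered monomials x1^a x2^b x3^c,
   represented by {mpoly k[3]} (monomial m <-> x1^(m 0) x2^(m 1) x3^(m 2));
   the multiplication is the skew one:
   (x1^a x2^b x3^c)(x1^d x2^e x3^f) = (-1)^((b+c)d + c e) x1^(a+d) x2^(b+e) x3^(c+f). *)

Section SkewAlg.
Variable k : fieldType.

Definition Om1 := {mpoly k[3]}.

Definition skew_sign (m n : 'X_{1..3}) : k :=
  (-1) ^+ ((m (inord 1) + m (inord 2)) * n (inord 0) + m (inord 2) * n (inord 1))%N.

Definition smul (p q : Om1) : Om1 :=
  \sum_(m <- msupp p) \sum_(n <- msupp q)
     (p@_m * q@_n * skew_sign m n) *: 'X_[m + n].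

(* the generator x_(i+1), i : 'I_3 *)
Definition gen (i : 'I_3) : Om1 := 'X_i.

Definition is_homog (d : nat) (p : Om1) : bool :=
  all (fun m : 'X_{1..3} => mdeg m == d) (msupp p).

Definition is_diff (M : 'M[k]_3) (d : Om1 -> Om1) : Prop :=
  [/\ forall (c : k) (p q : Om1), d (c *: p + q) = c *: d p + d q,
      forall (n : nat) (p q : Om1), is_homog n p ->
        d (smul p q) = smul (d p) q + (-1) ^+ n *: smul p (d q)
    & forall i : 'I_3, d (gen i) = \sum_(j < 3) M i j *: smul (gen j) (gen j)].

Definition is_dg_iso (d d' : Om1 -> Om1) (f : Om1 -> Om1) : Prop :=
  [/\ forall (c : k) (p q : Om1), f (c *: p + q) = c *: f p + f q,
      forall p q : Om1, f (smul p q) = smul (f p) (f q),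
      f 1 = 1,
      forall (n : nat) (p : Om1), is_homog n p -> is_homog n (f p)
    & bijective f /\ forall p : Om1, f (d p) = d' (f p)].

Definition dg_isomorphic (M N : 'M[k]_3) : Prop :=
  forall d d' : Om1 -> Om1, is_diff M d -> is_diff N d' ->
    exists f : Om1 -> Om1, is_dg_iso d d' f.

(* matrix unit E_ij (1-based in the paper; here 0-based ordinals) *)
Definition Eunit (i j : 'I_3) : 'M[k]_3 := delta_mx i j.

Definition mkM (m11 m12 m13 l1 l2 : k) : 'M[k]_3 :=
  \matrix_(i < 3, j < 3) (nth 0 [:: 1; l1; l2] i * nth 0 [:: m11; m12; m13] j).
End SkewAlg.

(* Main.v *)
Require Import Defs.
From HB Require Import structures.
From mathcomp Require Import all_boot all_order all_algebra all_fingroup.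
From mathcomp Require Import mpoly ring.
Import Order.TTheory GRing.Theory.
Local Open Scope ring_scope.


Section Gen.
Variable k : fieldType.
Notation P := (Om1 k).

Definition lin (h : P -> P) := forall c p q, h (c *: p + q) = c *: h p + h q.
Definition Lsum (F : 'X_{1..3} -> P) (p : P) : P := \sum_(m <- msupp p) p@_m *: F m.

Lemma sum_ext (G : 'X_{1..3} -> k -> P) (p : P) s :
  uniq s -> {subset msupp p <= s} -> (forall m, G m 0 = 0) ->
  \sum_(m <- msupp p) G m p@_m = \sum_(m <- s) G m p@_m.
Proof.
move=> us sub G0.
rewrite [RHS](bigID (mem (msupp p))) /= [X in _ + X]big1 ?addr0; last first.
  by move=> m /memN_msupp_eq0 ->.
rewrite -[RHS]big_filter; apply: perm_big; apply: uniq_perm.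
- exact: msupp_uniq.
- exact: filter_uniq.
by move=> m; rewrite mem_filter; case: (boolP (m \in msupp p)) => // /sub ->.
Qed.

Lemma lin_Lsum F : lin (Lsum F).
Proof.
move=> c p q; rewrite /Lsum.
set s := undup (msupp p ++ msupp q ++ msupp (c *: p + q)).
have us : uniq s by exact: undup_uniq.
have G0 : forall m, (fun m (a : k) => a *: F m) m 0 = 0 by move=> m; rewrite scale0r.
rewrite (@sum_ext (fun m a => a *: F m) (p) s us) //; last first.
  by move=> m Hm; rewrite mem_undup !mem_cat Hm.
rewrite (@sum_ext (fun m a => a *: F m) (q) s us) //; last first.
  by move=> m Hm; rewrite mem_undup !mem_cat Hm orbT.
rewrite (@sum_ext (fun m a => a *: F m) (c *: p + q) s us) //; last first.
  by move=> m Hm; rewrite mem_undup !mem_cat Hm !orbT.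
rewrite scaler_sumr -big_split; apply: eq_bigr => m _.
by rewrite mcoeffD mcoeffZ scalerDl scalerA.
Qed.

Lemma lin0 h : lin h -> h 0 = 0.
Proof.
move=> H; have E := H 1 0 0; rewrite !scale1r addr0 in E.
have E2 : h 0 + 0 = h 0 + h 0 by rewrite addr0.
by move/addrI: E2.
Qed.

Lemma linD h : lin h -> forall p q, h (p + q) = h p + h q.
Proof. by move=> H p q; have := H 1 p q; rewrite !scale1r. Qed.

Lemma linZ h : lin h -> forall c p, h (c *: p) = c *: h p.
Proof. by move=> H c p; rewrite -[c *: p]addr0 H lin0 // addr0. Qed.

Lemma lin_sum h (I : Type) (r : seq I) (F : I -> P) : lin h ->
  h (\sum_(i <- r) F i) = \sum_(i <- r) h (F i).
Proof.
move=> H; elim: r => [|a r IH]; first by rewrite !big_nil lin0.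
by rewrite !big_cons linD // IH.
Qed.

Lemma lin_ext h1 h2 : lin h1 -> lin h2 -> (forall m, h1 'X_[m] = h2 'X_[m]) -> h1 =1 h2.
Proof.
move=> H1 H2 E p; rewrite (mpolyE p) !lin_sum //; apply: eq_bigr => m _.
by rewrite !linZ // E.
Qed.

Lemma lin_comp h1 h2 : lin h1 -> lin h2 -> lin (fun p => h1 (h2 p)).
Proof. by move=> H1 H2 c p q; rewrite H2 H1. Qed.

Arguments lin_comp [h1 h2].
Arguments linZ [h].
Arguments linD [h].
Arguments lin_sum [h I].
Arguments lin0 [h].

Lemma lin_id : lin id. Proof. by []. Qed.

Lemma Lsum_X F m : Lsum F 'X_[m] = F m.
Proof. by rewrite /Lsum msuppX big_seq1 mcoeffX eqxx scale1r. Qed.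

Lemma eq_Lsum F1 F2 p : (forall m, F1 m = F2 m) -> Lsum F1 p = Lsum F2 p.
Proof. by move=> E; rewrite /Lsum; apply: eq_bigr => m _; rewrite E. Qed.

Lemma Lsum_linF c F1 F2 p : Lsum (fun m => c *: F1 m + F2 m) p = c *: Lsum F1 p + Lsum F2 p.
Proof.
rewrite /Lsum scaler_sumr -big_split; apply: eq_bigr => m _.
by rewrite scalerDr !scalerA mulrC.
Qed.

Lemma smulE p q : smul p q = Lsum (fun m => Lsum (fun n => skew_sign k m n *: 'X_[m + n]) q) p.
Proof.
rewrite /smul /Lsum; apply: eq_bigr => m _; rewrite scaler_sumr; apply: eq_bigr => n _.
by rewrite !scalerA.
Qed.

Lemma smulX a b : smul 'X_[a] 'X_[b] = skew_sign k a b *: 'X_[a + b].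
Proof. by rewrite smulE !Lsum_X. Qed.

Lemma lin_smull q : lin (fun p => smul p q).
Proof. by move=> c p1 p2; rewrite !smulE lin_Lsum. Qed.

Lemma lin_smulr p : lin (smul p).
Proof.
move=> c q1 q2; rewrite !smulE -Lsum_linF; apply: eq_Lsum => m.
by rewrite lin_Lsum.
Qed.


Lemma xx0 (x : P) : x = x + x -> x = 0.
Proof. move=> E; have E2 : x + 0 = x + x by rewrite addr0. by move/addrI: E2. Qed.

Lemma smul1r (p : P) : smul 1 p = p.
Proof.
move: p; apply: (@lin_ext (smul 1) id (lin_smulr (1 : P)) (@lin_id)) => m.
rewrite -mpolyX0 smulX /skew_sign !mnm0E /= expr0 scale1r.
by rewrite add0m.
Qed.

Lemma smulr1 (p : P) : smul p 1 = p.
Proof.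
move: p; apply: (@lin_ext (fun p => smul p 1) id (lin_smull (1 : P)) (@lin_id)) => m.
rewrite -mpolyX0 smulX /skew_sign !mnm0E /= !muln0 expr0 scale1r.
by rewrite addm0.
Qed.

Lemma homogX m : is_homog (mdeg m) ('X_[m] : P).
Proof. by rewrite /is_homog msuppX /= eqxx. Qed.

Lemma gen_homog i : is_homog 1 (gen k i).
Proof. by have := homogX U_(i); rewrite mdeg1. Qed.

Definition o0 : 'I_3 := inord 0.
Definition o1 : 'I_3 := inord 1.
Definition o2 : 'I_3 := inord 2.

Lemma ord3P (j : 'I_3) : j = o0 \/ j = o1 \/ j = o2.
Proof.
case: j => [[|[|[|]]]] //= H; [left|right;left|right;right]; apply: val_inj;
  by rewrite /= inordK.
Qed.

Lemma i3 (a b : nat) : (a < 3)%N -> (b < 3)%N -> ((inord a : 'I_3) == inord b) = (a == b).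
Proof.
move=> ha hb; apply/eqP/eqP => [/(congr1 (@nat_of_ord 3))|->//]; by rewrite !inordK.
Qed.

Lemma o01 : (o0 == o1) = false. Proof. by rewrite i3. Qed.
Lemma o02 : (o0 == o2) = false. Proof. by rewrite i3. Qed.
Lemma o12 : (o1 == o2) = false. Proof. by rewrite i3. Qed.
Lemma o10 : (o1 == o0) = false. Proof. by rewrite i3. Qed.
Lemma o20 : (o2 == o0) = false. Proof. by rewrite i3. Qed.
Lemma o21 : (o2 == o1) = false. Proof. by rewrite i3. Qed.
Definition oE := (o01, o02, o12, o10, o20, o21, eqxx).

Lemma sum3 (F : 'I_3 -> P) : \sum_(j < 3) F j = F o0 + F o1 + F o2.
Proof.
rewrite !big_ord_recl big_ord0 addr0 addrA.
by congr (F _ + F _ + F _); apply: val_inj; rewrite /= inordK.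
Qed.

Lemma decomp_at (m : 'X_{1..3}) (i : 'I_3) : (0 < m i)%N ->
  exists m', m = (U_(i) + m')%MM /\ forall j, j != i -> m' j = m j.
Proof.
move=> Hi; exists [multinom (if j == i then (m j).-1 else m j) | j < 3]; split.
  apply/mnmP => j; rewrite mnmDE mnmE mnm1E; case: (eqVneq j i) => [->|/negbTE Hj].
    by rewrite /= add1n prednK.
  by [].
by move=> j /negbTE Hj; rewrite mnmE Hj.
Qed.

Lemma decomp (m : 'X_{1..3}) : m != 0%MM ->
  exists i m', m = (U_(i) + m')%MM /\ skew_sign k U_(i) m' = 1.
Proof.
move=> Hm.
have o01 : (o0 == o1) = false by rewrite i3.
have o02 : (o0 == o2) = false by rewrite i3.
have o12 : (o1 == o2) = false by rewrite i3.
have o10 : (o1 == o0) = false by rewrite i3.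
have o20 : (o2 == o0) = false by rewrite i3.
have o21 : (o2 == o1) = false by rewrite i3.
case: (posnP (m o0)) => [h0|h0].
  case: (posnP (m o1)) => [h1|h1].
    case: (posnP (m o2)) => [h2|h2].
      case/negP: Hm; apply/eqP/mnmP => j; rewrite mnm0E.
      by case: (ord3P j) => [->|[->|->]].
    have [m' [E Hm']] := decomp_at _ _ h2; exists o2, m'; split => //.
    rewrite /skew_sign -/o0 -/o1 -/o2 !mnm1E (Hm' o0) ?(Hm' o1) ?o01 ?o02 ?o10 ?o12 ?o20 ?o21 ?h0 ?h1 ?eqxx //=.
  have [m' [E Hm']] := decomp_at _ _ h1; exists o1, m'; split => //.
  rewrite /skew_sign -/o0 -/o1 -/o2 !mnm1E (Hm' o0) ?o01 ?o02 ?o10 ?o12 ?o20 ?o21 ?h0 ?h1 ?eqxx //=.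
have [m' [E Hm']] := decomp_at _ _ h0; exists o0, m'; split => //.
rewrite /skew_sign -/o0 -/o1 -/o2 !mnm1E ?o01 ?o02 ?o10 ?o12 ?o20 ?o21 ?eqxx //=.
Qed.


Section Map.
Variable sg : 'X_{1..3} -> 'X_{1..3}.
Variable w : 'X_{1..3} -> k.

Definition fmap (p : P) : P := Lsum (fun m => w m *: 'X_[sg m]) p.

Lemma lin_fmap : lin fmap. Proof. exact: lin_Lsum. Qed.

Lemma fmapX m : fmap 'X_[m] = w m *: 'X_[sg m].
Proof. exact: Lsum_X. Qed.

Hypothesis Hadd : forall a b, sg (a + b)%MM = (sg a + sg b)%MM.
Hypothesis Hw : forall a b, w (a + b)%MM * skew_sign k a b = w a * w b * skew_sign k (sg a) (sg b).

Lemma fmap_mul p q : fmap (smul p q) = smul (fmap p) (fmap q).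
Proof.
move: p; apply: (@lin_ext (fun p => fmap (smul p q)) (fun p => smul (fmap p) (fmap q))
   (lin_comp lin_fmap (lin_smull q)) (lin_comp (lin_smull _) lin_fmap)) => a.
move: q; apply: (@lin_ext (fun q => fmap (smul 'X_[a] q)) (fun q => smul (fmap 'X_[a]) (fmap q))
   (lin_comp lin_fmap (lin_smulr _)) (lin_comp (lin_smulr _) lin_fmap)) => b.
rewrite smulX (linZ lin_fmap) !fmapX (linZ (lin_smull _)) (linZ (lin_smulr _)).
by rewrite smulX !scalerA Hadd mulrC Hw.
Qed.

Lemma fmap_homog (Hdeg : forall m, mdeg (sg m) = mdeg m) n p :
  is_homog n p -> is_homog n (fmap p).
Proof.
rewrite /is_homog => /allP H; apply/allP => m' /msupp_sum_le /flattenP [s /mapP [m Hm ->]].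
move/msuppZ_le/msuppZ_le; rewrite msuppX inE => /eqP ->; rewrite Hdeg; apply: H.
by move: Hm; rewrite mem_filter.
Qed.

Lemma fmap_bij (Hinv : forall m, sg (sg m) = m) (Hnz : forall m, w m != 0) : bijective fmap.
Proof.
pose g := Lsum (fun m => (w (sg m))^-1 *: 'X_[sg m]).
exists g.
  apply: (@lin_ext (fun p => g (fmap p)) id (lin_comp (lin_Lsum _) lin_fmap) (@lin_id)) => m.
  by rewrite fmapX /g (linZ (lin_Lsum _)) Lsum_X Hinv scalerA mulrC mulVf ?scale1r.
apply: (@lin_ext (fun p => fmap (g p)) id (lin_comp lin_fmap (lin_Lsum _)) (@lin_id)) => m.
by rewrite /g Lsum_X (linZ lin_fmap) fmapX Hinv scalerA mulVf ?scale1r.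
Qed.

Lemma fmap1 (H0 : sg 0%MM = 0%MM) (Hw0 : w 0%MM = 1) : fmap 1 = 1.
Proof. by rewrite -mpolyX0 fmapX H0 Hw0 scale1r. Qed.

End Map.

Lemma dg_comm (M N : 'M[k]_3) d d' f : lin f ->
  (forall p q, f (smul p q) = smul (f p) (f q)) -> f 1 = 1 ->
  (forall n p, is_homog n p -> is_homog n (f p)) ->
  is_diff M d -> is_diff N d' ->
  (forall i, f (d (gen k i)) = d' (f (gen k i))) -> forall p, f (d p) = d' (f p).
Proof.
move=> Lf Mf f1 Hf [Ld Lb Dg] [Ld' Lb' Dg'] Hg.
have h01 : is_homog 0 (1 : P) by have := homogX 0%MM; rewrite mdeg0 mpolyX0.
have d1 : forall dd : P -> P, (forall n p q, is_homog n p ->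
   dd (smul p q) = smul (dd p) q + (-1) ^+ n *: smul p (dd q)) -> dd 1 = 0.
  move=> dd Hdd; apply: xx0; have := Hdd 0%N 1 1 h01.
  by rewrite smul1r smulr1 expr0 scale1r smul1r.
have Ld1 : lin d by [].
have Ld'1 : lin d' by [].
apply: (@lin_ext (fun p => f (d p)) (fun p => d' (f p)) (lin_comp Lf Ld1) (lin_comp Ld'1 Lf)) => m.
have [n Hn] : exists n, (mdeg m <= n)%N by exists (mdeg m).
elim: n m Hn => [|n IH] m Hm.
  have /eqP -> : m == 0%MM by rewrite -mdeg_eq0 -leqn0.
  by rewrite mpolyX0 (d1 d Lb) f1 (d1 d' Lb') lin0.
case: (eqVneq m 0%MM) => [->|Hm0].
  by rewrite mpolyX0 (d1 d Lb) f1 (d1 d' Lb') lin0.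
have [i [m' [E Hs]]] := decomp _ Hm0.
have -> : 'X_[m] = smul (gen k i) 'X_[m'] by rewrite /gen smulX Hs scale1r E.
have Hm' : (mdeg m' <= n)%N by move: Hm; rewrite E mdegD mdeg1.
rewrite (Lb 1%N _ _ (gen_homog i)) (linD Lf) (linZ Lf) !Mf Hg IH //.
by rewrite (Lb' 1%N _ _ (Hf _ _ (gen_homog i))).
Qed.

Lemma iso_gen (M N : 'M[k]_3) sg w
  (Hadd : forall a b, sg (a + b)%MM = (sg a + sg b)%MM)
  (Hw : forall a b, w (a + b)%MM * skew_sign k a b = w a * w b * skew_sign k (sg a) (sg b))
  (Hdeg : forall m, mdeg (sg m) = mdeg m)
  (Hinv : forall m, sg (sg m) = m) (Hnz : forall m, w m != 0)
  (H0 : sg 0%MM = 0%MM) (Hw0 : w 0%MM = 1)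
  (Hgen : forall i, exists t, sg (U_(i))%MM = (U_(t))%MM /\
     \sum_(j < 3) M i j *: (w (U_(j) + U_(j))%MM *: 'X_[sg (U_(j) + U_(j))%MM])
     = w (U_(i))%MM *: \sum_(j < 3) N t j *: 'X_[(U_(j) + U_(j))%MM]) :
  dg_isomorphic M N.
Proof.
move=> d d' Dd Dd'; exists (fmap sg w).
have Mf := @fmap_mul sg w Hadd Hw.
have f1 := @fmap1 sg w H0 Hw0.
have Hf := @fmap_homog sg w Hdeg.
split => //; first exact: lin_fmap.
split; first exact: (@fmap_bij sg w Hinv Hnz).
apply: (@dg_comm M N d d' (fmap sg w) (lin_fmap sg w) Mf f1 Hf Dd Dd') => i.
have gg : forall j, smul (gen k j) (gen k j) = 'X_[(U_(j) + U_(j))%MM].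
  move=> j; rewrite /gen smulX /skew_sign -/o0 -/o1 -/o2 !mnm1E.
  by case: (ord3P j) => [->|[->|->]]; rewrite ?oE /= expr0 scale1r.
case: Dd => _ _ Dg; case: Dd' => Ld' _ Dg'.
have [t [Ht Ex]] := Hgen i.
rewrite Dg (lin_sum _ _ (lin_fmap sg w)).
have -> : fmap sg w (gen k i) = w (U_(i))%MM *: gen k t by rewrite /gen fmapX Ht.
rewrite (linZ Ld') Dg'.
under eq_bigr do rewrite (linZ (lin_fmap sg w)) gg fmapX.
under [in RHS]eq_bigr do rewrite gg.
exact: Ex.
Qed.

End Gen.


Section Concrete.
Variable k : fieldType.



Definition wsc (c0 c1 c2 : k) (m : 'X_{1..3}) : k :=
  c0 ^+ (m o0) * c1 ^+ (m o1) * c2 ^+ (m o2).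

Lemma iso_scale (M N : 'M[k]_3) c0 c1 c2 : c0 != 0 -> c1 != 0 -> c2 != 0 ->
  (forall i, \sum_(j < 3) M i j *: (wsc c0 c1 c2 (U_(j) + U_(j))%MM *: 'X_[(U_(j) + U_(j))%MM])
     = wsc c0 c1 c2 (U_(i))%MM *: \sum_(j < 3) N i j *: 'X_[(U_(j) + U_(j))%MM]) ->
  dg_isomorphic M N.
Proof.
move=> n0 n1 n2 H.
apply: (@iso_gen k M N id (wsc c0 c1 c2)) => //.
- by move=> a b; rewrite /wsc !mnmDE !exprD; ring.
- by move=> m; rewrite /wsc !mulf_neq0 // expf_neq0.
- by rewrite /wsc !mnm0E !expr0 !mulr1.
by move=> i; exists i; split => //; apply: H.
Qed.


Definition tp : {perm 'I_3} := tperm o1 o2.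
Definition swp (m : 'X_{1..3}) : 'X_{1..3} := [multinom m (tp j) | j < 3].
Definition wsw (c : k) (m : 'X_{1..3}) : k := c ^+ (m o0) * (-1) ^+ (m o1 * m o2).

Lemma tp0 : tp o0 = o0. Proof. by rewrite /tp tpermD // ?o10 ?o20. Qed.
Lemma tp1 : tp o1 = o2. Proof. by rewrite /tp tpermL. Qed.
Lemma tp2 : tp o2 = o1. Proof. by rewrite /tp tpermR. Qed.

Lemma swpU i : swp (U_(i))%MM = (U_(tp i))%MM.
Proof.
apply/mnmP => j; rewrite mnmE !mnm1E.
by case: (ord3P i) => [->|[->|->]]; case: (ord3P j) => [->|[->|->]]; rewrite ?tp0 ?tp1 ?tp2 ?oE.
Qed.

Lemma iso_swap (M N : 'M[k]_3) c : c != 0 ->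
  (forall i, \sum_(j < 3) M i j *: (wsw c (U_(j) + U_(j))%MM *: 'X_[(U_(tp j) + U_(tp j))%MM])
     = wsw c (U_(i))%MM *: \sum_(j < 3) N (tp i) j *: 'X_[(U_(j) + U_(j))%MM]) ->
  dg_isomorphic M N.
Proof.
move=> n0 H.
have Hadd : forall a b, swp (a + b)%MM = (swp a + swp b)%MM.
  by move=> a b; apply/mnmP => j; rewrite !mnmE.
apply: (@iso_gen k M N swp (wsw c)) => //.
- move=> a b; rewrite /wsw /skew_sign -/o0 -/o1 -/o2 !mnmE tp0 tp1 tp2 (exprD c).
  set a0 := a o0; set a1 := a o1; set a2 := a o2.
  set b0 := b o0; set b1 := b o1; set b2 := b o2.
  have key : (-1) ^+ ((a1 + b1) * (a2 + b2)) * (-1) ^+ ((a1 + a2) * b0 + a2 * b1)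
     = (-1) ^+ (a1 * a2) * (-1) ^+ (b1 * b2) * (-1) ^+ ((a2 + a1) * b0 + a1 * b2) :> k.
    rewrite -!exprD.
    have -> : ((a1 + b1) * (a2 + b2) + ((a1 + a2) * b0 + a2 * b1) =
       a1 * a2 + b1 * b2 + ((a2 + a1) * b0 + a1 * b2) + 2 * (a2 * b1))%N by ring.
    by rewrite exprD exprM sqrrN expr1n expr1n mulr1.
  transitivity (c ^+ a0 * c ^+ b0 * ((-1) ^+ ((a1 + b1) * (a2 + b2)) * (-1) ^+ ((a1 + a2) * b0 + a2 * b1))); first by ring.
  by rewrite key; ring.
- by move=> m; apply: mdeg_mperm.
- by move=> m; apply/mnmP => j; rewrite !mnmE /tp tpermK.
- by move=> m; rewrite /wsw mulf_neq0 // ?expf_neq0 // oppr_eq0 oner_eq0.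
- by apply/mnmP => j; rewrite !mnmE.
- by rewrite /wsw !mnm0E expr0 mul0n expr0 mulr1.
move=> i; exists (tp i); split; first exact: swpU.
rewrite -H; apply: eq_bigr => j _; by rewrite Hadd swpU.
Qed.

End Concrete.

Lemma sqrt_ex (k : closedFieldType) (x : k) : exists y : k, y ^+ 2 = x.
Proof.
have [y Hy] := @solve_monicpoly k 2 (nth 0 [:: x]) isT.
exists y; rewrite Hy !big_ord_recr big_ord0 /=.
by rewrite add0r expr0 mulr1 mul0r addr0.
Qed.


Lemma v0 : (o0 : nat) = 0%N. Proof. by rewrite /o0 inordK. Qed.
Lemma v1 : (o1 : nat) = 1%N. Proof. by rewrite /o1 inordK. Qed.
Lemma v2 : (o2 : nat) = 2%N. Proof. by rewrite /o2 inordK. Qed.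

Lemma case1 (F : fieldType) (m12 m13 a b : F) : m12 != 0 -> m13 != 0 ->
  a ^+ 2 = m12^-1 -> b ^+ 2 = m13^-1 ->
  dg_isomorphic (mkM 0 m12 m13 0 0) (delta_mx o0 o1 + delta_mx o0 o2).
Proof.
move=> h12 h13 Ha Hb.
have a0 : a != 0.
  by apply/eqP => a0; move: Ha; rewrite a0 expr0n /= => /esym/eqP; rewrite invr_eq0 (negbTE h12).
have b0 : b != 0.
  by apply/eqP => b0; move: Hb; rewrite b0 expr0n /= => /esym/eqP; rewrite invr_eq0 (negbTE h13).
apply: (@iso_scale F _ _ 1 a b) => //; first exact: oner_neq0.
move=> i; case: (ord3P i) => [->|[->|->]]; rewrite !sum3 !mxE /wsc !mnmDE !mnm1E ?oE /= ?v0 ?v1 ?v2 /=.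
all: apply/mpolyP => n; rewrite !(mcoeffD, mcoeffZ, mcoeffX).
- have -> : m12 = (a ^+ 2)^-1 by rewrite Ha invrK.
  have -> : m13 = (b ^+ 2)^-1 by rewrite Hb invrK.
  by field; rewrite b0 a0.
- by ring.
- by ring.
Qed.


Lemma case2a (F : fieldType) (m12 : F) : m12 != 0 ->
  dg_isomorphic (mkM 0 m12 0 0 0) (delta_mx o0 o1).
Proof.
move=> h12.
apply: (@iso_scale F _ _ m12 1 1) => //; try exact: oner_neq0.
move=> i; case: (ord3P i) => [->|[->|->]]; rewrite !sum3 !mxE /wsc !mnmDE !mnm1E ?oE /= ?v0 ?v1 ?v2 /=.
all: apply/mpolyP => n; rewrite !(mcoeffD, mcoeffZ, mcoeffX).
all: by ring.
Qed.

Lemma case2b (F : fieldType) (m13 : F) : m13 != 0 ->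
  dg_isomorphic (mkM 0 0 m13 0 0) (delta_mx o0 o1).
Proof.
move=> h13.
apply: (@iso_swap F _ _ m13) => //.
move=> i; case: (ord3P i) => [->|[->|->]]; rewrite ?tp0 ?tp1 ?tp2 !sum3 ?tp0 ?tp1 ?tp2 !mxE /wsw !mnmDE !mnm1E ?oE /= ?v0 ?v1 ?v2 /=.
all: apply/mpolyP => n; rewrite !(mcoeffD, mcoeffZ, mcoeffX).
all: by ring.
Qed.

Theorem lemma7p1 (k : closedFieldType) (hchar : [pchar k] =i pred0)
  (m11 m12 m13 l1 l2 : k) (hl1 : l1 = 0) (hl2 : l2 = 0)
  (hnz : [|| m11 != 0, m12 != 0 | m13 != 0])
  (heq : m12 * l1 ^+ 2 + m13 * l2 ^+ 2 = m11) :
  (m12 != 0 -> m13 != 0 ->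
     dg_isomorphic (mkM m11 m12 m13 l1 l2) (Eunit k (inord 0) (inord 1) + Eunit k (inord 0) (inord 2)))
  /\
  ((m13 = 0 /\ m12 != 0) \/ (m12 = 0 /\ m13 != 0) ->
     dg_isomorphic (mkM m11 m12 m13 l1 l2) (Eunit k (inord 0) (inord 1))).
Proof.
subst l1 l2.
rewrite -heq !expr2 !mulr0 addr0; clear heq hnz.
rewrite /Eunit -/o0 -/o1 -/o2.
split.
  move=> h12 h13.
  have [a Ha] := @sqrt_ex k (m12^-1); have [b Hb] := @sqrt_ex k (m13^-1).
  exact: case1 h12 h13 Ha Hb.
case=> [[-> h12]|[-> h13]]; [exact: case2a | exact: case2b].
Qed.
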